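(* Consider a tripartite Bell scenario in which Alice has inputs $A_1,A_2,A_3$, Bob has inputs $B_1,B_2$ and Charlie has a single input $C_1$, and every input has four outcomes labelled by bit pairs $x=(x_0,x_1)\in\{0,1\}^2$. For an observable $X$ with outcome $(x_0,x_1)$ define the $\pm1$-valued quantities $X^{10}=(-1)^{x_0}$, $X^{01}=(-1)^{x_1}$, $X^{11}=(-1)^{x_0\oplus x_1}$, and write $\langle X^{ij}Y^{kl}\rangle$ for the expectation of $X^{ij}Y^{kl}$ when $X$ and $Y$ are measured jointly by different parties. Define $$\mathcal{I}=\langle A_1^{10}B_1^{10}\rangle+\langle A_1^{01}B_2^{10}\rangle+\langle A_1^{11}C_1^{10}\rangle+\langle A_2^{10}B_1^{01}\rangle+\langle A_2^{01}B_2^{01}\rangle+\langle A_2^{11}C_1^{01}\rangle+\langle A_3^{10}B_1^{11}\rangle+\langle A_3^{01}B_2^{11}\rangle-\langle A_3^{11}C_1^{11}\rangle .$$ Then: (i) the Alice–Bob part of $\mathcal{I}$ (the six terms involving $B_1,B_2$) attains its maximal value $6$ in a local deterministic model, and the Alice–Charlie part (the three terms involving $C_1$) attains its maximal value $3$ in a local deterministic model; (ii) every local hidden variable model satisfies $\mathcal{I}\le 7$; (iii) there exists a no-signaling behaviour $P(a,b,c\mid A_k,B_l,C_1)$ for which $\mathcal{I}=9$.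
   Context: A local hidden variable model is a convex mixture of deterministic assignments of an outcome to each of the inputs $A_1,A_2,A_3,B_1,B_2,C_1$. A no-signaling behaviour is a family of distributions $P(a,b,c\mid A_k,B_l,C_1)$, $k\in\{1,2,3\}$, $l\in\{1,2\}$, such that the marginal distribution of any subset of the parties does not depend on the inputs of the remaining parties. *)

(* Defs.v *)
From mathcomp Require Import all_boot all_order all_algebra.
Set Implicit Arguments. Unset Strict Implicit. Unset Printing Implicit Defensive.
Import Order.TTheory GRing.Theory Num.Theory.
Local Open Scope ring_scope.

Definition obs := (bool * bool)%type.

(* Alice's inputs A_1,A_2,A_3 are 'I_3 (A_k = index k-1);
   Bob's inputs B_1,B_2 are 'I_2; Charlie has a single input C_1 (left implicit). *)
Definition A1 : 'I_3 := @Ordinal 3 0 isT.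
Definition A2 : 'I_3 := @Ordinal 3 1 isT.
Definition A3 : 'I_3 := @Ordinal 3 2 isT.
Definition B1 : 'I_2 := @Ordinal 2 0 isT.
Definition B2 : 'I_2 := @Ordinal 2 1 isT.

Section Bell.
Variable R : realFieldType.

Definition sgnb (b : bool) : R := if b then -1 else 1.

Definition X10 (x : obs) : R := sgnb x.1.
Definition X01 (x : obs) : R := sgnb x.2.
Definition X11 (x : obs) : R := sgnb (x.1 (+) x.2).

(* A behaviour: P k l a b c = P(a,b,c | A_k, B_l, C_1). *)
Definition behaviour := 'I_3 -> 'I_2 -> obs -> obs -> obs -> R.

Definition is_behaviour (P : behaviour) : Prop :=
  (forall k l a b c, 0 <= P k l a b c) /\
  (forall k l, \sum_(a : obs) \sum_(b : obs) \sum_(c : obs) P k l a b c = 1).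

(* Charlie has a single input, so only the
   dependencies on Alice's and Bob's inputs need to be ruled out. *)
Definition no_signaling (P : behaviour) : Prop :=
  is_behaviour P /\
  (forall k l l' a c, \sum_(b : obs) P k l a b c = \sum_(b : obs) P k l' a b c) /\
  (forall k k' l b c, \sum_(a : obs) P k l a b c = \sum_(a : obs) P k' l a b c) /\
  (forall k l l' a, \sum_(b : obs) \sum_(c : obs) P k l a b c
                  = \sum_(b : obs) \sum_(c : obs) P k l' a b c) /\
  (forall k k' l b, \sum_(a : obs) \sum_(c : obs) P k l a b c
                  = \sum_(a : obs) \sum_(c : obs) P k' l a b c) /\
  (forall k k' l l' c, \sum_(a : obs) \sum_(b : obs) P k l a b c
                     = \sum_(a : obs) \sum_(b : obs) P k' l' a b c).

Definition corrAB (P : behaviour) (k : 'I_3) (l : 'I_2) (f g : obs -> R) : R :=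
  \sum_(a : obs) \sum_(b : obs) \sum_(c : obs) P k l a b c * f a * g b.

(* <A_k^f C_1^h>, computed from the joint distribution with Bob's input B_1
   (for no-signaling behaviours this does not depend on Bob's input). *)
Definition corrAC (P : behaviour) (k : 'I_3) (f h : obs -> R) : R :=
  \sum_(a : obs) \sum_(b : obs) \sum_(c : obs) P k B1 a b c * f a * h c.

Definition I_AB (P : behaviour) : R :=
  corrAB P A1 B1 X10 X10 + corrAB P A1 B2 X01 X10 +
  corrAB P A2 B1 X10 X01 + corrAB P A2 B2 X01 X01 +
  corrAB P A3 B1 X10 X11 + corrAB P A3 B2 X01 X11.

Definition I_AC (P : behaviour) : R :=
  corrAC P A1 X11 X10 + corrAC P A2 X11 X01 - corrAC P A3 X11 X11.

Definition I_val (P : behaviour) : R := I_AB P + I_AC P.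

Definition strat := ({ffun 'I_3 -> obs} * {ffun 'I_2 -> obs} * obs)%type.

Definition det_behaviour (s : strat) : behaviour :=
  fun k l a b c =>
    if [&& a == s.1.1 k, b == s.1.2 l & c == s.2] then 1 else 0.

Definition lhv_weights (w : strat -> R) : Prop :=
  (forall s, 0 <= w s) /\ \sum_(s : strat) w s = 1.

Definition lhv_behaviour (w : strat -> R) : behaviour :=
  fun k l a b c => \sum_(s : strat) w s * det_behaviour s k l a b c.

End Bell.

(* Main.v *)
Require Import Defs.
From mathcomp Require Import all_boot all_order all_algebra.
From mathcomp Require Import ring lra.
Import Order.TTheory GRing.Theory Num.Theory.
Local Open Scope ring_scope.
Lemma sumobs (V : nmodType) (F : obs -> V) : \sum_(x : obs) F x = F (false,false) + F (false,true) + F (true,false) + F(true,true).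
Proof. transitivity (\sum_(p : obs) F (p.1,p.2)); first by apply eq_bigr => -[].
rewrite -(pair_bigA _ (fun a b => F (a,b))) /=. rewrite !big_bool /=. by rewrite addrC [F (false,true) + _]addrC [F (true,true) + _]addrC !addrA. Qed.

Section S.
Variable R : realFieldType.
Lemma sum_det3 (x y z : obs) (F : obs -> obs -> obs -> R) :
 \sum_a \sum_b \sum_c (if [&& a == x, b == y & c == z] then 1 else 0) * F a b c = F x y z.
Proof.
rewrite (bigD1 x) //= [X in _ + X]big1 => [|a /negPf Ha]; last first.
  by apply: big1 => b _; apply: big1 => c _; rewrite Ha mul0r.
rewrite eqxx /= addr0 (bigD1 y) //= [X in _ + X]big1 => [|b /negPf Hb]; last first.
  by apply: big1 => c _; rewrite Hb mul0r.
rewrite eqxx /= addr0 (bigD1 z) //= [X in _ + X]big1 => [|c /negPf Hc]; last by rewrite Hc mul0r.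
by rewrite eqxx mul1r addr0.
Qed.

Lemma corrAB_det s k l f g : corrAB (det_behaviour R s) k l f g = f (s.1.1 k) * g (s.1.2 l).
Proof.
rewrite /corrAB /det_behaviour.
under eq_bigr do under eq_bigr do under eq_bigr do rewrite -mulrA.
exact: (sum_det3 _ _ _ (fun a b c => f a * g b)).
Qed.
Lemma corrAC_det s k f h : corrAC (det_behaviour R s) k f h = f (s.1.1 k) * h s.2.
Proof.
rewrite /corrAC /det_behaviour.
under eq_bigr do under eq_bigr do under eq_bigr do rewrite -mulrA.
exact: (sum_det3 _ _ _ (fun a b c => f a * h c)).
Qed.

Lemma sum_lhv w k l (G : obs -> obs -> obs -> R) :
  \sum_a \sum_b \sum_c lhv_behaviour w k l a b c * G a b c =
  \sum_s w s * (\sum_a \sum_b \sum_c det_behaviour R s k l a b c * G a b c).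
Proof.
rewrite /lhv_behaviour.
under eq_bigr do under eq_bigr do under eq_bigr do rewrite mulr_suml.
under eq_bigr do under eq_bigr do rewrite exchange_big.
under eq_bigr do rewrite exchange_big.
rewrite exchange_big; apply: eq_bigr => s _.
rewrite mulr_sumr; apply: eq_bigr => a _.
rewrite mulr_sumr; apply: eq_bigr => b _.
rewrite mulr_sumr; apply: eq_bigr => c _.
by rewrite mulrA.
Qed.
Lemma corrAB_lhv w k l f g : corrAB (lhv_behaviour w) k l f g = \sum_s w s * corrAB (det_behaviour R s) k l f g.
Proof.
rewrite /corrAB.
under eq_bigr do under eq_bigr do under eq_bigr do rewrite -mulrA.
rewrite sum_lhv; apply: eq_bigr => s _; congr (_ * _).
by do 3! (apply: eq_bigr => ? _); rewrite mulrA.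
Qed.
Lemma corrAC_lhv w k f h : corrAC (lhv_behaviour w) k f h = \sum_s w s * corrAC (det_behaviour R s) k f h.
Proof.
rewrite /corrAC.
under eq_bigr do under eq_bigr do under eq_bigr do rewrite -mulrA.
rewrite sum_lhv; apply: eq_bigr => s _; congr (_ * _).
by do 3! (apply: eq_bigr => ? _); rewrite mulrA.
Qed.
Lemma Ival_lhv w : I_val (lhv_behaviour w) = \sum_s w s * I_val (det_behaviour R s).
Proof.
rewrite /I_val /I_AB /I_AC !corrAB_lhv !corrAC_lhv.
under [RHS]eq_bigr do rewrite !(mulrDr, mulrN).
by rewrite !big_split /= sumrN.
Qed.
Lemma sgnbM a b : sgnb R a * sgnb R b = sgnb R (a (+) b).
Proof. by case: a; case: b; rewrite /sgnb /= ?mulrNN ?mulr1 ?mul1r ?mulN1r. Qed.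
Lemma key (x1 x2 x3 x4 x5 x6 x7 x8 : bool) :
  sgnb R x1 + sgnb R x2 + sgnb R x3 + sgnb R x4 + sgnb R x5 + sgnb R x6 +
  (sgnb R x7 + sgnb R x8 - sgnb R (x1 (+) x2 (+) x3 (+) x4 (+) x5 (+) x6 (+) x7 (+) x8)) <= 7.
Proof.
by case: x1; case: x2; case: x3; case: x4; case: x5; case: x6; case: x7; case: x8; rewrite /sgnb /=; lra.
Qed.
Lemma Ival_det s : I_val (det_behaviour R s) <= 7.
Proof.
rewrite /I_val /I_AB /I_AC !corrAB_det !corrAC_det /X10 /X01 /X11 !sgnbM.
case: (s.1.1 A1) => [p1 q1]; case: (s.1.1 A2) => [p2 q2]; case: (s.1.1 A3) => [p3 q3].
case: (s.1.2 B1) => [u1 v1]; case: (s.1.2 B2) => [u2 v2]; case: s.2 => [c1 c2] /=.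
have -> : p3 (+) q3 (+) (c1 (+) c2) = (p1 (+) u1) (+) (q1 (+) u2) (+) (p2 (+) v1) (+) (q2 (+) v2) (+) (p3 (+) (u1 (+) v1)) (+) (q3 (+) (u2 (+) v2)) (+) (p1 (+) q1 (+) c1) (+) (p2 (+) q2 (+) c2).
  by case: p1; case: q1; case: p2; case: q2; case: p3; case: q3; case: u1; case: v1; case: u2; case: v2; case: c1; case: c2.
exact: key.
Qed.
Definition condAB (k : 'I_3) (l : 'I_2) (a b : obs) : bool :=
 match nat_of_ord k, nat_of_ord l with
 | 0, 0 => a.1 == b.1 | 0, _ => a.2 == b.1
 | 1, 0 => a.1 == b.2 | 1, _ => a.2 == b.2
 | _, 0 => a.1 == b.1 (+) b.2 | _, _ => a.2 == b.1 (+) b.2 end.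
Definition condAC (k : 'I_3) (a c : obs) : bool :=
 match nat_of_ord k with
 | 0 => a.1 (+) a.2 == c.1 | 1 => a.1 (+) a.2 == c.2
 | _ => a.1 (+) a.2 == ~~ (c.1 (+) c.2) end.
Definition PB : behaviour R := fun k l a b c => (condAB k l a b && condAC k a c)%:R / 16.


Lemma div16 (n : nat) : n = 16%N -> n%:R / 16 = 1 :> R.
Proof. by move->; apply: divff; rewrite pnatr_eq0. Qed.

Ltac dI3 k := case: k => [[|[|[|?]]] ?] //.
Ltac dI2 k := case: k => [[|[|?]] ?] //.
Ltac dO a := case: a => [[] []].

Lemma PB_ns : no_signaling PB.
Proof.
split; [split|].
  by move=> k l a b c; rewrite /PB divr_ge0 ?ler0n.
  move=> k l; rewrite !sumobs /PB -!mulrDl -!natrD; apply: div16.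
  by dI3 k; dI2 l.
split.
  move=> k l l' a c; rewrite !sumobs /PB -!mulrDl -!natrD; congr (_%:R / _).
  by dI3 k; dI2 l; dI2 l'; dO a; dO c.
split.
  move=> k k' l b c; rewrite !sumobs /PB -!mulrDl -!natrD; congr (_%:R / _).
  by dI3 k; dI3 k'; dI2 l; dO b; dO c.
split.
  move=> k l l' a; rewrite !sumobs /PB -!mulrDl -!natrD; congr (_%:R / _).
  by dI3 k; dI2 l; dI2 l'; dO a.
split.
  move=> k k' l b; rewrite !sumobs /PB -!mulrDl -!natrD; congr (_%:R / _).
  by dI3 k; dI3 k'; dI2 l; dO b.
move=> k k' l l' c; rewrite !sumobs /PB -!mulrDl -!natrD; congr (_%:R / _).
by dI3 k; dI3 k'; dI2 l; dI2 l'; dO c.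
Qed.

Lemma PB_val : I_val PB = 9.
Proof.
rewrite /I_val /I_AB /I_AC /corrAB /corrAC !sumobs /PB /X10 /X01 /X11 /sgnb /=.
by field.
Qed.
Lemma sgnb_le1 b : sgnb R b <= 1. Proof. by case: b; rewrite /sgnb; lra. Qed.
Lemma sgnb_ge1 b : -1 <= sgnb R b. Proof. by case: b; rewrite /sgnb; lra. Qed.
End S.

Theorem mainTheorem2 (R : realFieldType) :
  ((exists s : strat, I_AB (det_behaviour R s) = 6) /\
   (forall s : strat, I_AB (det_behaviour R s) <= 6)) /\
  ((exists s : strat, I_AC (det_behaviour R s) = 3) /\
   (forall s : strat, I_AC (det_behaviour R s) <= 3)) /\
  (forall w : strat -> R, lhv_weights w -> I_val (lhv_behaviour w) <= 7) /\
  (exists P : behaviour R, no_signaling P /\ I_val P = 9).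
Proof.
split; [split|split; [split|split]].
- exists ([ffun=> (false,false)], [ffun=> (false,false)], (false,false)).
  rewrite /I_AB !corrAB_det !ffunE /X10 /X01 /X11 /sgnb /=; lra.
- move=> s; rewrite /I_AB !corrAB_det /X10 /X01 /X11 !sgnbM.
  case: (s.1.1 A1) => [p1 q1]; case: (s.1.1 A2) => [p2 q2]; case: (s.1.1 A3) => [p3 q3].
  case: (s.1.2 B1) => [u1 v1]; case: (s.1.2 B2) => [u2 v2] /=.
  have := sgnb_le1 R (p1 (+) u1); have := sgnb_le1 R (q1 (+) u2).
  have := sgnb_le1 R (p2 (+) v1); have := sgnb_le1 R (q2 (+) v2).
  have := sgnb_le1 R (p3 (+) (u1 (+) v1)); have := sgnb_le1 R (q3 (+) (u2 (+) v2)).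
  lra.
- exists ([ffun k : 'I_3 => if val k == 2%N then (true,false) else (false,false)], [ffun=> (false,false)], (false,false)).
  rewrite /I_AC !corrAC_det !ffunE /X10 /X01 /X11 /sgnb /=; lra.
- move=> s; rewrite /I_AC !corrAC_det /X10 /X01 /X11 !sgnbM.
  have := sgnb_le1 R ((s.1.1 A1).1 (+) (s.1.1 A1).2 (+) (s.2).1).
  have := sgnb_le1 R ((s.1.1 A2).1 (+) (s.1.1 A2).2 (+) (s.2).2).
  have := sgnb_ge1 R ((s.1.1 A3).1 (+) (s.1.1 A3).2 (+) ((s.2).1 (+) (s.2).2)).
  lra.
- move=> w [w0 w1]; rewrite Ival_lhv.
  apply: le_trans (_ : \sum_s w s * 7 <= 7).
    by apply: ler_sum => s _; apply: ler_wpM2l => //; apply: Ival_det.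
  by rewrite -mulr_suml w1 mul1r.
- by exists (PB R); split; [apply: PB_ns | apply: PB_val].
Qed.
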